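(* Let $(\Delta x,\Delta y)\in\mathbb{R}^2$, $(o_x,o_y)\in\mathbb{R}^2$, $(x_0,y_0,\theta_0)\in\mathbb{R}^3$, $R>0$ and $t_{\max}>0$. Consider the forward left-turning arc robot path $$x(t)=x_0-R\sin\theta_0+R\sin(\theta_0+t),\quad y(t)=y_0+R\cos\theta_0-R\cos(\theta_0+t),\quad \theta(t)=\theta_0+t,\qquad t\in(0,t_{\max}),$$ (an arc of radius $R$ with centre angle $t_{\max}$), and let the anchoring point have world coordinates $\tilde x(t)=x(t)+\cos\theta(t)\Delta x-\sin\theta(t)\Delta y$, $\tilde y(t)=y(t)+\sin\theta(t)\Delta x+\cos\theta(t)\Delta y$, assumed different from $(o_x,o_y)$ for all $t$. Define $$A=o_x-x_0+R\sin\theta_0,\quad B=o_y-y_0-R\cos\theta_0,\quad C=A\Delta x-BR+B\Delta y,\quad D=AR-A\Delta y+B\Delta x,$$ assume $(C,D)\neq(0,0)$, and let $\varphi$ be the angle with $\cos\varphi=\frac{C}{\sqrt{C^2+D^2}}$, $\sin\varphi=\frac{D}{\sqrt{C^2+D^2}}$. If either $$\frac{A^2+B^2}{\sqrt{C^2+D^2}}>\cos(t+\theta_0-\varphi)\ \text{ for all } t\in(0,t_{\max}),$$ or $$\frac{A^2+B^2}{\sqrt{C^2+D^2}}<\cos(t+\theta_0-\varphi)\ \text{ for all } t\in(0,t_{\max}),$$ then the relative angle function $\Phi(t)=\arctan\left(\frac{o_y-\tilde y(t)}{o_x-\tilde x(t)}\right)-\theta(t)$ is monotonic on $(0,t_{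\max})$.
   Context: $(\Delta x,\Delta y)$ is the position of the tether–robot anchoring point $s$ in the robot's egocentric frame, and $(o_x,o_y)$ is the (fixed) position of the last tether–obstacle contact point $o$ in the world frame. In $\Phi$, $\arctan\left(\frac{o_y-\tilde y}{o_x-\tilde x}\right)$ denotes the direction angle of the vector from $(\tilde x,\tilde y)$ to $(o_x,o_y)$, taken as a continuous (differentiable) branch along the path. *)

(* Defs.v *)
From Stdlib Require Import Reals.
Open Scope R_scope.

Definition path_x (x0 th0 Rr t : R) : R := x0 - Rr * sin th0 + Rr * sin (th0 + t).
Definition path_y (y0 th0 Rr t : R) : R := y0 + Rr * cos th0 - Rr * cos (th0 + t).
Definition path_th (th0 t : R) : R := th0 + t.

Definition anchor_x (x0 th0 Rr dx dy t : R) : R :=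
  path_x x0 th0 Rr t + cos (path_th th0 t) * dx - sin (path_th th0 t) * dy.
Definition anchor_y (y0 th0 Rr dx dy t : R) : R :=
  path_y y0 th0 Rr t + sin (path_th th0 t) * dx + cos (path_th th0 t) * dy.

Definition coefA (ox x0 th0 Rr : R) : R := ox - x0 + Rr * sin th0.
Definition coefB (oy y0 th0 Rr : R) : R := oy - y0 - Rr * cos th0.
Definition coefC (A B Rr dx dy : R) : R := A * dx - B * Rr + B * dy.
Definition coefD (A B Rr dx dy : R) : R := A * Rr - A * dy + B * dx.

(* Main.v *)
Require Import Defs.
From Stdlib Require Import Reals Lra.
From Coquelicot Require Import Coquelicot.
Open Scope R_scope.
Lemma lift_deriv (f u v : R -> R) (t0 du dv : R) :
  is_derive u t0 du -> is_derive v t0 dv ->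
  locally t0 (fun t => 0 < u t ^ 2 + v t ^ 2 /\
     cos (f t) = u t / sqrt (u t ^ 2 + v t ^ 2) /\
     sin (f t) = v t / sqrt (u t ^ 2 + v t ^ 2) /\
     Rabs (f t - f t0) < PI / 2) ->
  is_derive f t0 ((u t0 * dv - v t0 * du) / (u t0 ^ 2 + v t0 ^ 2)).
Proof.
  intros Hu Hv Hloc.
  destruct (locally_singleton _ _ Hloc) as [Hn0 [Hc0 [Hs0 _]]].
  set (a := u t0) in *. set (b := v t0) in *.
  apply is_derive_ext_loc with
    (f := fun t => f t0 + atan ((a * v t - b * u t) / (a * u t + b * v t))).
  - eapply filter_imp; [|exact Hloc]. intros t [Hn [Hc [Hs Hd]]].
    assert (Hsn : 0 < sqrt (u t ^ 2 + v t ^ 2)) by (apply sqrt_lt_R0; lra).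
    assert (Hsn0 : 0 < sqrt (a ^ 2 + b ^ 2)) by (apply sqrt_lt_R0; lra).
    set (n := sqrt (u t ^ 2 + v t ^ 2)) in *.
    set (n0 := sqrt (a ^ 2 + b ^ 2)) in *.
    assert (Ecos : cos (f t - f t0) = (a * u t + b * v t) / (n * n0)).
    { rewrite cos_minus, Hc, Hs, Hc0, Hs0. field. lra. }
    assert (Esin : sin (f t - f t0) = (a * v t - b * u t) / (n * n0)).
    { rewrite sin_minus, Hc, Hs, Hc0, Hs0. field. lra. }
    apply Rabs_def2 in Hd. destruct Hd as [Hd1 Hd2].
    assert (Hpos : 0 < cos (f t - f t0)) by (apply cos_gt_0; lra).
    assert (Hdt : 0 < a * u t + b * v t).
    { replace (a * u t + b * v t) with (cos (f t - f t0) * (n * n0)).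
      - apply Rmult_lt_0_compat; [lra|]. apply Rmult_lt_0_compat; lra.
      - rewrite Ecos. field. lra. }
    assert (Et : (a * v t - b * u t) / (a * u t + b * v t) = tan (f t - f t0)).
    { unfold tan. rewrite Ecos, Esin. field. repeat split; lra. }
    rewrite Et, atan_tan by lra. simpl; lra.
  - assert (HL : exists l, is_derive (fun t => f t0 + atan ((a * v t - b * u t) / (a * u t + b * v t))) t0 l /\ l = (a * dv - b * du) / (a ^ 2 + b ^ 2)).
    { eexists; split.
      - apply (is_derive_plus (fun _ => f t0) (fun t => atan ((a * v t - b * u t) / (a * u t + b * v t)))). apply is_derive_const.
        apply (is_derive_comp atan (fun t => (a * v t - b * u t) / (a * u t + b * v t))).
        + apply is_derive_atan.
        + apply is_derive_div.
          * apply (is_derive_minus (fun t => a * v t) (fun t => b * u t)); apply is_derive_scal; [exact Hv|exact Hu].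
          * apply (is_derive_plus (fun t => a * u t) (fun t => b * v t)); apply is_derive_scal; [exact Hu|exact Hv].
          * fold a b. nra.
      - fold a b. unfold plus, zero, scal, minus, plus, opp, mult; simpl.
        unfold mult; simpl.
        change (u t0) with a; change (v t0) with b.
        replace (a * b - b * a) with 0 by ring.
        replace (a * v t0 - b * u t0) with 0 by (change (u t0) with a; change (v t0) with b; ring).
        assert (0 < a * a + b * b) by nra.
        unfold Rsqr. field. lra.

 }
    destruct HL as [l [H1 H2]]. rewrite <- H2. exact H1.
Qed.

Definition Wx (A B dx th0 t : R) := A * cos (th0 + t) + B * sin (th0 + t) - dx.
Definition Wy (A B r th0 t : R) := B * cos (th0 + t) - A * sin (th0 + t) + r.
Definition dWx (A B th0 t : R) := - A * sin (th0 + t) + B * cos (th0 + t).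
Definition dWy (A B th0 t : R) := - B * sin (th0 + t) - A * cos (th0 + t).

Lemma Wx_deriv A B dx th0 t : is_derive (Wx A B dx th0) t (dWx A B th0 t).
Proof. unfold Wx, dWx. auto_derive; [exact I|]. ring. Qed.
Lemma Wy_deriv A B r th0 t : is_derive (Wy A B r th0) t (dWy A B th0 t).
Proof. unfold Wy, dWy. auto_derive; [exact I|]. ring. Qed.

Theorem theorem3 (dx dy ox oy x0 y0 th0 Rr tmax phi : R) (alpha : R -> R) :
  0 < Rr -> 0 < tmax ->
  (forall t, 0 < t < tmax ->
     (anchor_x x0 th0 Rr dx dy t, anchor_y y0 th0 Rr dx dy t) <> (ox, oy)) ->
  let A := coefA ox x0 th0 Rr in
  let B := coefB oy y0 th0 Rr in
  let C := coefC A B Rr dx dy in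
  let D := coefD A B Rr dx dy in
  (C, D) <> (0, 0) ->
  cos phi = C / sqrt (C ^ 2 + D ^ 2) ->
  sin phi = D / sqrt (C ^ 2 + D ^ 2) ->
  (forall t, 0 < t < tmax -> continuity_pt alpha t) ->
  (forall t, 0 < t < tmax ->
     let vx := ox - anchor_x x0 th0 Rr dx dy t in
     let vy := oy - anchor_y y0 th0 Rr dx dy t in
     cos (alpha t) = vx / sqrt (vx ^ 2 + vy ^ 2) /\
     sin (alpha t) = vy / sqrt (vx ^ 2 + vy ^ 2)) ->
  ((forall t, 0 < t < tmax ->
      (A ^ 2 + B ^ 2) / sqrt (C ^ 2 + D ^ 2) > cos (t + th0 - phi)) \/
   (forall t, 0 < t < tmax ->
      (A ^ 2 + B ^ 2) / sqrt (C ^ 2 + D ^ 2) < cos (t + th0 - phi))) ->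
  let Phi := fun t => alpha t - path_th th0 t in
  (forall s t, 0 < s -> s <= t -> t < tmax -> Phi s <= Phi t) \/
  (forall s t, 0 < s -> s <= t -> t < tmax -> Phi t <= Phi s).
Proof.
  intros HR Ht Hne A B C D HCD Hcp Hsp Hcont Hang Hcase Phi.
  set (r := Rr - dy).
  set (u := Wx A B dx th0). set (v := Wy A B r th0).
  assert (Hpt : forall t, 0 < t < tmax ->
     0 < u t ^ 2 + v t ^ 2 /\
     cos (Phi t) = u t / sqrt (u t ^ 2 + v t ^ 2) /\
     sin (Phi t) = v t / sqrt (u t ^ 2 + v t ^ 2)).
  { intros t Hti. destruct (Hang t Hti) as [Hca Hsa].
    set (vx := ox - anchor_x x0 th0 Rr dx dy t) in *.
    set (vy := oy - anchor_y y0 th0 Rr dx dy t) in *.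
    assert (Hcs : sin (th0 + t) * sin (th0 + t) + cos (th0 + t) * cos (th0 + t) = 1).
    { pose proof (sin2_cos2 (th0 + t)). unfold Rsqr in *. lra. }
    assert (E1 : vx * cos (th0 + t) + vy * sin (th0 + t) = u t).
    { transitivity (A * cos (th0 + t) + B * sin (th0 + t) - dx *
          (sin (th0 + t) * sin (th0 + t) + cos (th0 + t) * cos (th0 + t))).
      - unfold vx, vy, anchor_x, anchor_y, path_x, path_y, path_th, A, B, coefA, coefB. ring.
      - rewrite Hcs. unfold u, Wx. ring. }
    assert (E2 : vy * cos (th0 + t) - vx * sin (th0 + t) = v t).
    { transitivity (B * cos (th0 + t) - A * sin (th0 + t) + r *
          (sin (th0 + t) * sin (th0 + t) + cos (th0 + t) * cos (th0 + t))).
      - unfold vx, vy, anchor_x, anchor_y, path_x, path_y, path_th, A, B, coefA, coefB, r. ring.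
      - rewrite Hcs. unfold v, Wy. ring. }
    assert (E3 : u t ^ 2 + v t ^ 2 = vx ^ 2 + vy ^ 2).
    { rewrite <- E1, <- E2.
      transitivity ((vx ^ 2 + vy ^ 2) *
          (sin (th0 + t) * sin (th0 + t) + cos (th0 + t) * cos (th0 + t))).
      - ring.
      - rewrite Hcs. ring. }
    assert (Hpos : 0 < vx ^ 2 + vy ^ 2).
    { destruct (Req_dec vx 0) as [Hx|Hx]; destruct (Req_dec vy 0) as [Hy|Hy].
      - exfalso. apply (Hne t Hti). unfold vx, vy in Hx, Hy. f_equal; lra.
      - assert (0 < vy ^ 2) by (apply pow2_gt_0; auto). nra.
      - assert (0 < vx ^ 2) by (apply pow2_gt_0; auto). nra.
      - assert (0 < vy ^ 2) by (apply pow2_gt_0; auto). nra. }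
    rewrite E3. split; [exact Hpos|].
    assert (Hsq : 0 < sqrt (vx ^ 2 + vy ^ 2)) by (apply sqrt_lt_R0; lra).
    unfold Phi, path_th. split.
    - rewrite cos_minus, Hca, Hsa, <- E1. field. lra.
    - rewrite sin_minus, Hca, Hsa, <- E2. field. lra. }
  assert (Hder : forall t, 0 < t < tmax ->
     is_derive Phi t ((u t * dWy A B th0 t - v t * dWx A B th0 t) / (u t ^ 2 + v t ^ 2))).
  { intros t0 Hti.
    apply lift_deriv; [apply Wx_deriv | apply Wy_deriv |].
    assert (HcP : continuity_pt Phi t0).
    { unfold Phi. apply continuity_pt_minus; [apply Hcont; lra|].
      unfold path_th. apply continuity_pt_plus.
      - apply continuity_pt_const. intros ? ?; reflexivity.
      - apply continuity_pt_id. }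
    assert (Hpi : 0 < PI / 2) by (pose proof PI_RGT_0; lra).
    pose proof (proj1 (continuity_pt_locally Phi t0) HcP (mkposreal _ Hpi)) as HcP'.
    clear HcP. rename HcP' into HcP.
    assert (Hint : locally t0 (fun t => 0 < t < tmax)).
    { apply (locally_interval _ t0 (Finite 0) (Finite tmax)); simpl; try lra.
      intros y H1 H2; simpl in *; lra. }
    generalize (filter_and _ _ Hint HcP). apply filter_imp.
    intros t [Ht1 Ht2]. destruct (Hpt t Ht1) as [P1 [P2 P3]].
    repeat split; auto. }
  assert (HS : 0 < sqrt (C ^ 2 + D ^ 2)).
  { apply sqrt_lt_R0.
    destruct (Req_dec C 0) as [Hx|Hx]; destruct (Req_dec D 0) as [Hy|Hy].
    - exfalso. apply HCD. rewrite Hx, Hy. reflexivity.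
    - assert (0 < D ^ 2) by (apply pow2_gt_0; auto). nra.
    - assert (0 < C ^ 2) by (apply pow2_gt_0; auto). nra.
    - assert (0 < D ^ 2) by (apply pow2_gt_0; auto). nra. }
  assert (Hnum : forall t, u t * dWy A B th0 t - v t * dWx A B th0 t =
      sqrt (C ^ 2 + D ^ 2) * cos (t + th0 - phi) - (A ^ 2 + B ^ 2)).
  { intros t.
    assert (Hcs : sin (th0 + t) * sin (th0 + t) + cos (th0 + t) * cos (th0 + t) = 1).
    { pose proof (sin2_cos2 (th0 + t)). unfold Rsqr in *. lra. }
    rewrite cos_minus, Hcp, Hsp.
    replace (t + th0) with (th0 + t) by ring.
    transitivity (C * cos (th0 + t) + D * sin (th0 + t) - (A ^ 2 + B ^ 2) *
          (sin (th0 + t) * sin (th0 + t) + cos (th0 + t) * cos (th0 + t))).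
    - unfold u, v, Wx, Wy, dWx, dWy, C, D, coefC, coefD, r. ring.
    - rewrite Hcs. field. lra. }
  destruct Hcase as [Hc | Hc].
  - right. intros s t Hs Hst Htm.
    destruct (Req_dec s t) as [Heq|Hneq]; [subst; lra|].
    assert (Hinc : forall x y, 0 < x -> x < y -> y < tmax -> - Phi x < - Phi y).
    { intros x y Hx Hxy Hy.
      apply (incr_function (fun t => - Phi t) (Finite 0) (Finite tmax)
        (fun t => - ((u t * dWy A B th0 t - v t * dWx A B th0 t) / (u t ^ 2 + v t ^ 2))));
        try (simpl; lra).
      - intros z Hz1 Hz2. simpl in Hz1, Hz2. apply (is_derive_opp Phi). apply Hder; lra.
      - intros z Hz1 Hz2. simpl in Hz1, Hz2. destruct (Hpt z (conj Hz1 Hz2)) as [P1 _].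
        rewrite Hnum. specialize (Hc z (conj Hz1 Hz2)).
        apply Rmult_lt_compat_l with (r := sqrt (C ^ 2 + D ^ 2)) in Hc; [|exact HS].
        replace (sqrt (C ^ 2 + D ^ 2) * ((A ^ 2 + B ^ 2) / sqrt (C ^ 2 + D ^ 2)))
          with (A ^ 2 + B ^ 2) in Hc by (field; lra).
        assert (0 < / (u z ^ 2 + v z ^ 2)) by (apply Rinv_0_lt_compat; lra).
        unfold Rdiv. rewrite Ropp_mult_distr_l. apply Rmult_gt_0_compat; lra. }
    assert (s < t) by lra. specialize (Hinc s t Hs H Htm). lra.
  - left. intros s t Hs Hst Htm.
    destruct (Req_dec s t) as [Heq|Hneq]; [subst; lra|].
    assert (Hinc : forall x y, 0 < x -> x < y -> y < tmax -> Phi x < Phi y).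
    { intros x y Hx Hxy Hy.
      apply (incr_function Phi (Finite 0) (Finite tmax)
        (fun t => ((u t * dWy A B th0 t - v t * dWx A B th0 t) / (u t ^ 2 + v t ^ 2))));
        try (simpl; lra).
      - intros z Hz1 Hz2. simpl in Hz1, Hz2. apply Hder; lra.
      - intros z Hz1 Hz2. simpl in Hz1, Hz2. destruct (Hpt z (conj Hz1 Hz2)) as [P1 _].
        rewrite Hnum. specialize (Hc z (conj Hz1 Hz2)).
        apply Rmult_lt_compat_l with (r := sqrt (C ^ 2 + D ^ 2)) in Hc; [|exact HS].
        replace (sqrt (C ^ 2 + D ^ 2) * ((A ^ 2 + B ^ 2) / sqrt (C ^ 2 + D ^ 2)))
          with (A ^ 2 + B ^ 2) in Hc by (field; lra).
        apply Rmult_gt_0_compat; [lra | apply Rinv_0_lt_compat; lra]. }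
    assert (s < t) by lra. specialize (Hinc s t Hs H Htm). lra.
Qed.
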